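(* Let $\gamma>0$, $\gamma\neq1$ be constant. If $\gamma$ is irrational, then $N^{\rm alg}_{\mathbb{R}}(r)=N^{\rm geom}_{\mathbb{R}}(r)$ for all $r$. If $\gamma=p/q$ with $p,q$ positive coprime integers, then, as $r\to\infty$, \[ N^{\rm alg}_{\mathbb{R}}(r)=\Bigl(\Bigl|1-\frac pq\Bigr|+\frac2q\Bigr)\frac{r}{\pi}+O(1). \]
   Context: Half-line problem: for $\lambda\neq0$, find $(u,v)$ on $[0,1]$ with $-u''-\lambda^2u=0$, $-v''-\lambda^2\gamma^2v=0$, $u(0)=v(0)=0$, $u(1)=v(1)$, $u'(1)=v'(1)$; $\lambda$ is an ITE if a nontrivial pair exists. ITEs are the nonzero zeros of $F(\lambda)=\gamma\sin\lambda\cos(\gamma\lambda)-\sin(\gamma\lambda)\cos\lambda$. The algebraic multiplicity of an ITE is its order as a zero of $F$; the geometric multiplicity is $1$. $N^{\rm alg}_{\mathbb{R}}(r)$ (resp. $N^{\rm geom}_{\mathbb{R}}(r)$) is the number of real ITEs in $(0,r]$ counted with algebraic (resp. geometric) multiplicity. *)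

(* Defs.v *)
From Stdlib Require Import Reals Lra Lia List.
Import ListNotations.
Open Scope R_scope.

(* Characteristic function: ITEs are the nonzero zeros of F. *)
Definition F (gamma x : R) : R :=
  gamma * sin x * cos (gamma * x) - sin (gamma * x) * cos x.

Definition zero_order (f : R -> R) (x0 : R) (m : nat) : Prop :=
  exists d : nat -> R -> R,
    (forall x, d 0%nat x = f x) /\
    (forall (k : nat) (x : R), derivable_pt_lim (d k) x (d (S k) x)) /\
    (forall k : nat, (k < m)%nat -> d k x0 = 0) /\
    d m x0 <> 0.

Definition real_ITEs_upto (gamma r : R) (l : list R) : Prop :=
  NoDup l /\ forall x, In x l <-> (0 < x <= r /\ F gamma x = 0).

(* N^alg_R(r) = n : ITEs in (0,r] counted with algebraic multiplicity
   (order of zero of F). *)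
Definition Nalg (gamma r : R) (n : nat) : Prop :=
  exists (l : list R) (ms : list nat),
    real_ITEs_upto gamma r l /\
    Forall2 (fun x m => zero_order (F gamma) x m) l ms /\
    n = list_sum ms.

(* N^geom_R(r) = n : each ITE has geometric multiplicity 1. *)
Definition Ngeom (gamma r : R) (n : nat) : Prop :=
  exists l : list R, real_ITEs_upto gamma r l /\ n = length l.

Definition irrational (x : R) : Prop :=
  ~ exists (a b : Z), b <> 0%Z /\ x = IZR a / IZR b.

(* Main.v *)
From Coquelicot Require Import Coquelicot.
From Stdlib Require Import Reals Lra Lia List Arith ZArith Permutation FunctionalExtensionality.
Require Import Defs.
Open Scope R_scope.

Definition Dfun (g x : R) := (g+1) + (g-1)*cos(2*g*x).
Definition vfun (g x : R) := (g-1)*sin(2*g*x)/Dfun g x.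
Definition phi (g x : R) := (1-g)*x + atan (vfun g x).
Definition Efun (g x : R) := (g+1)^2 + (g-1)^2 + 2*(g^2-1)*cos(2*g*x).

Lemma D_pos g x : 0 < g -> 0 < Dfun g x.
Proof.
  intros Hg; unfold Dfun. destruct (COS_bound (2*g*x)) as [H1 H2].
  destruct (Rle_dec g 1); nra.
Qed.

Lemma E_eq g x : Efun g x = (Dfun g x)^2 + ((g-1)*sin(2*g*x))^2.
Proof.
  unfold Efun, Dfun. pose proof (sin2_cos2 (2*g*x)) as H. unfold Rsqr in H.
  assert (Hs : sin (2*g*x) * sin (2*g*x) = 1 - cos (2*g*x) * cos (2*g*x)) by lra.
  replace (((g-1)*sin(2*g*x))^2) with ((g-1)^2 * (sin (2*g*x) * sin (2*g*x))) by ring.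
  rewrite Hs. ring.
Qed.

Lemma E_pos g x : 0 < g -> 0 < Efun g x.
Proof. intros Hg. rewrite E_eq. pose proof (D_pos g x Hg).
  apply Rplus_lt_le_0_compat; [apply pow_lt; lra| apply pow2_ge_0]. Qed.

Lemma phi_deriv g x : 0 < g ->
  derivable_pt_lim (phi g) x (2*(1-g^2)*(1-cos(2*g*x)) / Efun g x).
Proof.
  intros Hg. apply is_derive_Reals.
  pose proof (D_pos g x Hg) as HD. pose proof (E_pos g x Hg) as HE.
  assert (Hv : is_derive (vfun g) x
     ((g-1)*(2*g*cos(2*g*x)) / Dfun g x - (g-1)*sin(2*g*x)*((g-1)*(-sin(2*g*x))*(2*g)) / (Dfun g x)^2)).
  { unfold vfun, Dfun. unfold Dfun in HD. auto_derive. lra. field. lra. }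
  assert (Ha : is_derive atan (vfun g x) (/(1 + (vfun g x)^2))).
  { apply is_derive_Reals. apply derivable_pt_lim_atan. }
  unfold phi.
  set (dv := (g-1)*(2*g*cos(2*g*x)) / Dfun g x - (g-1)*sin(2*g*x)*((g-1)*(-sin(2*g*x))*(2*g)) / (Dfun g x)^2) in Hv.
  assert (Hc : is_derive (fun y => atan (vfun g y)) x (dv * /(1 + (vfun g x)^2))).
  { apply (is_derive_comp atan (vfun g)). exact Ha. exact Hv. }
  assert (Hl : is_derive (fun y => (1-g)*y) x (1-g)).
  { auto_derive. easy. ring. }
  pose proof (is_derive_plus _ _ x _ _ Hl Hc) as Hp.
  eapply is_derive_ext in Hp. 2: { intros t. reflexivity. }
  replace (2*(1-g^2)*(1-cos(2*g*x)) / Efun g x) with (plus (1-g) (dv * /(1 + (vfun g x)^2))).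
  exact Hp.
  assert (Heq : (1-g) + dv * /(1 + (vfun g x)^2) = 2*(1-g^2)*(1-cos(2*g*x)) / Efun g x :> R).
  {  rewrite E_eq in *. unfold vfun in *.
  pose proof (sin2_cos2 (2*g*x)) as H. unfold Rsqr in H.
  set (c := cos (2*g*x)) in *. set (sn := sin (2*g*x)) in *. set (D := Dfun g x) in *.
  assert (HDn : D <> 0) by lra.
  assert (H1 : 1 + ((g - 1) * sn / D)^2 = (D^2 + ((g-1)*sn)^2) / D^2) by (field; lra).
  rewrite H1.
  assert (Hdv : dv = 2*g*(g-1)*(c*D + (g-1)*(sn*sn)) / D^2) by (unfold dv; field; lra).
  rewrite Hdv.
  assert (HEn : D^2 + ((g-1)*sn)^2 <> 0) by lra.
  transitivity (((1-g)*(D^2 + ((g-1)*sn)^2) + 2*g*(g-1)*(c*D+(g-1)*(sn*sn))) / (D^2 + ((g-1)*sn)^2)).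
  { field. split; assumption. }
  f_equal.
  assert (Hs : sn * sn = 1 - c*c) by lra.
  replace (((g-1)*sn)^2) with ((g-1)^2*(sn*sn)) by ring.
  rewrite Hs. unfold D, Dfun. fold c. ring.
}
  exact Heq.
Qed.

Lemma floor_ex (y : R) : 0 <= y -> exists M : nat, INR M <= y < INR M + 1.
Proof.
  intros Hy. destruct (archimed y) as [H1 H2].
  assert (Hz : (0 < up y)%Z) by (apply lt_IZR; lra).
  exists (Z.to_nat (up y - 1)).
  rewrite INR_IZR_INZ, Z2Nat.id by lia. rewrite minus_IZR. simpl. lra.
Qed.

Lemma strict_incr (f f' : R -> R) (g : R) : 0 < g ->
  (forall x, derivable_pt_lim f x (f' x)) -> (forall x, 0 <= f' x) ->
  (forall x, sin (g*x) <> 0 -> 0 < f' x) -> forall x y, x < y -> f x < f y.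
Proof.
  intros Hg Hd H0 H1.
  assert (Hle : forall x y, x < y -> f x <= f y).
  { intros x y Hxy. destruct (MVT_cor2 f f' x y Hxy (fun c _ => Hd c)) as [c [Hc _]].
    pose proof (H0 c). nra. }
  intros x y Hxy.
  pose proof PI_RGT_0 as Hpi.
  destruct (archimed (g*x/PI)) as [A1 A2].
  set (k := (up (g*x/PI) - 1)%Z).
  assert (Hk1 : IZR k * PI <= g*x).
  { unfold k. rewrite minus_IZR. simpl.
    assert (IZR (up (g*x/PI)) - 1 <= g*x/PI) by lra.
    apply Rmult_le_compat_r with (r:=PI) in H; [|lra].
    replace (g*x/PI*PI) with (g*x) in H by (field; lra). lra. }
  assert (Hk2 : g*x < (IZR k + 1) * PI).
  { unfold k. rewrite minus_IZR. simpl.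
    replace (IZR (up (g * x / PI)) - 1 + 1) with (IZR (up (g * x / PI))) by ring.
    apply Rmult_lt_compat_r with (r:=PI) in A1; [|lra].
    replace (g*x/PI*PI) with (g*x) in A1 by (field; lra). lra. }
  set (v := Rmin y ((IZR k + 1) * PI / g)).
  assert (Hxv : x < v).
  { unfold v. apply Rmin_glb_lt. lra.
    apply Rmult_lt_reg_l with g. lra. replace (g * ((IZR k + 1) * PI / g)) with ((IZR k + 1) * PI) by (field; lra). lra. }
  assert (Hvy : v <= y) by apply Rmin_l.
  destruct (MVT_cor2 f f' x v Hxv (fun c _ => Hd c)) as [c [Hc [Hc1 Hc2]]].
  assert (Hs : sin (g*c) <> 0).
  { intros Hsc. apply sin_eq_0_0 in Hsc. destruct Hsc as [j Hj].
    assert (Hv2 : v <= (IZR k + 1) * PI / g) by apply Rmin_r.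
    assert (E1 : IZR k * PI < IZR j * PI) by nra.
    assert (E2 : g * c < (IZR k + 1) * PI).
    { apply Rlt_le_trans with (g*v). nra.
      apply Rmult_le_compat_l with (r:=g) in Hv2; [|lra].
      replace (g * ((IZR k + 1) * PI / g)) with ((IZR k + 1) * PI) in Hv2 by (field; lra). lra. }
    assert (F1 : IZR k < IZR j) by nra.
    assert (F2 : IZR j < IZR k + 1) by nra.
    apply lt_IZR in F1. replace (IZR k + 1) with (IZR (k+1)) in F2 by (rewrite plus_IZR; reflexivity).
    apply lt_IZR in F2. lia. }
  pose proof (H1 c Hs).
  assert (f x < f v) by nra.
  destruct (Req_dec v y) as [->|Hne]. lra.
  pose proof (Hle v y ltac:(lra)). lra.
Qed.

Lemma count (psi : R -> R) : continuity psi -> (forall x y, x < y -> psi x < psi y) ->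
  psi 0 = 0 -> forall r, exists l M, NoDup l /\
   (forall x, In x l <-> (0 < x <= r /\ exists k : Z, psi x = IZR k * PI)) /\
   length l = M /\ (0 <= r -> INR M <= psi r / PI < INR M + 1).
Proof.
  intros Hc Hm H0 r. pose proof PI_RGT_0 as Hpi.
  assert (Hinj : forall x y, psi x = psi y -> x = y).
  { intros x y E. destruct (Rtotal_order x y) as [H|[H|H]]; auto.
    apply Hm in H; lra. apply Hm in H; lra. }
  destruct (Rlt_dec r 0) as [Hr|Hr].
  { exists nil, 0%nat. split. constructor. split. intros x; simpl; split; [tauto|lra].
    split; auto. intros; lra. }
  assert (Hpr : 0 <= psi r / PI).
  { destruct (Req_dec r 0) as [->|Hr0]. rewrite H0. unfold Rdiv; lra.
    pose proof (Hm 0 r ltac:(lra)). apply Rlt_le; apply Rdiv_lt_0_compat; lra. }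
  destruct (floor_ex _ Hpr) as [M [HM1 HM2]].
  assert (Hind : forall m, (m <= M)%nat -> exists l, NoDup l /\
     (forall x, In x l <-> (0 < x <= r /\ exists k : nat, (1 <= k <= m)%nat /\ psi x = INR k * PI)) /\
     length l = m).
  { induction m as [|m IH]; intros Hmle.
    - exists nil. split. constructor. split; auto. intros x; simpl; split; [tauto|].
      intros [_ [k [Hk _]]]. lia.
    - destruct (IH ltac:(lia)) as [l [Hnd [Hin Hlen]]].
      assert (HmM : INR (S m) <= INR M) by (apply le_INR; lia).
      assert (Hr' : INR (S m) * PI <= psi r).
      { apply Rmult_le_compat_r with (r:=PI) in HM1; [|lra].
        replace (psi r / PI * PI) with (psi r) in HM1 by (field; lra). nra. }
      destruct (IVT_cor (fun t => psi t - INR (S m) * PI) 0 r) as [x [Hx Hfx]].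
      { intros t. apply continuity_pt_minus. apply Hc. apply continuity_pt_const. intros a b; reflexivity. }
      lra.
      { cbv beta. rewrite H0. pose proof (pos_INR m). rewrite S_INR in *. assert (0 <= psi r - (INR m + 1) * PI) by lra. assert (0 - (INR m + 1) * PI < 0) by nra. nra. }
      assert (Hpx : psi x = INR (S m) * PI) by lra.
      assert (Hx0 : x <> 0).
      { intros ->. rewrite H0 in Hpx. rewrite S_INR in Hpx. pose proof (pos_INR m). nra. }
      exists (x :: l). split; [|split].
      + constructor; auto. intros Hl. apply Hin in Hl. destruct Hl as [_ [k [Hk Hk']]].
        rewrite Hpx in Hk'. apply Rmult_eq_reg_r in Hk'; [|lra]. apply INR_eq in Hk'. lia.
      + intros y. simpl. rewrite Hin. split.
        * intros [<-|[Hy [k [Hk Hk']]]]. split. lra. exists (S m). split; [lia|auto].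
          split; auto. exists k. split; [lia|auto].
        * intros [Hy [k [Hk Hk']]]. destruct (Nat.eq_dec k (S m)) as [->|Hne].
          left. apply Hinj. lra. right. split; auto. exists k. split; [lia|auto].
      + simpl. lia. }
  destruct (Hind M (le_n M)) as [l [Hnd [Hin Hlen]]].
  exists l, M. split; auto. split; [|split; auto].
  intros x. rewrite Hin. split.
  - intros [Hx [k [Hk Hk']]]. split; auto. exists (Z.of_nat k). rewrite <- INR_IZR_INZ. auto.
  - intros [Hx [k Hk]]. split; auto.
    assert (Hp0 : 0 < psi x) by (rewrite <- H0; apply Hm; lra).
    assert (Hpr2 : psi x <= psi r).
    { destruct (Req_dec x r) as [->|Hne]. lra. apply Rlt_le, Hm; lra. }
    assert (Hk0 : (0 < k)%Z). { apply lt_IZR. nra. }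
    assert (Hk1 : IZR k < INR M + 1).
    { apply Rmult_lt_compat_r with (r:=PI) in HM2; [|lra].
      replace (psi r / PI * PI) with (psi r) in HM2 by (field; lra). nra. }
    rewrite INR_IZR_INZ in Hk1. rewrite <- plus_IZR in Hk1. apply lt_IZR in Hk1.
    exists (Z.to_nat k). split. lia. rewrite INR_IZR_INZ, Z2Nat.id by lia. auto.
Qed.

Lemma nodup_len (l1 l2 : list R) : NoDup l1 -> NoDup l2 -> (forall x, In x l1 <-> In x l2) ->
  length l1 = length l2.
Proof. intros. apply Permutation_length, NoDup_Permutation; auto. Qed.
Lemma F_repr g x : 0 < g -> 2 * F g x = Dfun g x * sqrt (1 + (vfun g x)²) * sin (phi g x).
Proof.
  intros Hg. pose proof (D_pos g x Hg) as HD.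
  assert (Hq : 0 < sqrt (1 + (vfun g x)²)). { apply sqrt_lt_R0. pose proof (Rle_0_sqr (vfun g x)). lra. }
  unfold phi. rewrite sin_plus, sin_atan, cos_atan.
  transitivity (Dfun g x * sin ((1-g)*x) + (g-1)*sin(2*g*x) * cos((1-g)*x)).
  2: { unfold vfun in *. field. split; lra. }
  unfold F, Dfun.
  replace ((1-g)*x) with (x - g*x) by ring. replace (2*g*x) with (2*(g*x)) by ring.
  rewrite sin_minus, cos_minus, sin_2a, cos_2a.
  pose proof (sin2_cos2 (g*x)) as H. unfold Rsqr in H.
  set (s := sin x) in *. set (c := cos x) in *. set (sg := sin (g*x)) in *. set (cg := cos (g*x)) in *.
  assert (E : forall a b, a - b = 0 -> a = b) by (intros; lra). apply eq_sym, E.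
  transitivity ((g-1)*(cg*cg+sg*sg-1)*(s*cg + c*sg)). ring.
  replace (cg*cg+sg*sg-1) with 0 by lra. ring.
Qed.

Lemma F_zero_iff g x : 0 < g -> (F g x = 0 <-> sin (phi g x) = 0).
Proof.
  intros Hg. pose proof (F_repr g x Hg) as H. pose proof (D_pos g x Hg) as HD.
  assert (Hq : 0 < sqrt (1 + (vfun g x)²)). { apply sqrt_lt_R0. pose proof (Rle_0_sqr (vfun g x)). lra. }
  split; intros H1.
  - rewrite H1 in H. assert (0 < Dfun g x * sqrt (1 + (vfun g x)²)) by nra.
    apply (Rmult_eq_reg_l (Dfun g x * sqrt (1 + (vfun g x)²))); lra.
  - rewrite H1 in H. lra.
Qed.

Definition dseq (g : R) (k : nat) (x : R) : R :=
  (g-1)/2 * (1+g)^k * sin ((1+g)*x + INR k * PI/2) + (g+1)/2 * (1-g)^k * sin ((1-g)*x + INR k * PI/2).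

Lemma sin_shift u k : sin (u + INR (S k) * PI/2) = cos (u + INR k * PI/2).
Proof. rewrite S_INR. replace (u + (INR k + 1) * PI/2) with ((u + INR k * PI/2) + PI/2) by field.
  rewrite sin_plus, sin_PI2, cos_PI2. ring. Qed.

Lemma dseq_deriv g k x : derivable_pt_lim (dseq g k) x (dseq g (S k) x).
Proof.
  unfold dseq. rewrite !sin_shift.
  set (u := INR k * PI/2).
  assert (H : forall a C, derivable_pt_lim (fun y => C * a^k * sin (a*y + u)) x (C * a^(S k) * cos (a*x+u))).
  { intros a C.
    replace (C * a^(S k) * cos (a*x+u)) with (C * a^k * (cos (a*x+u) * (a*1 + 0))) by (simpl; ring).
    apply derivable_pt_lim_scal.
    apply (derivable_pt_lim_comp (fun y => a*y+u) sin x).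
    apply derivable_pt_lim_plus. apply derivable_pt_lim_scal. apply derivable_pt_lim_id.
    apply derivable_pt_lim_const. apply derivable_pt_lim_sin. }
  apply (derivable_pt_lim_plus (fun y => (g-1)/2 * (1+g)^k * sin ((1+g)*y + u))
    (fun y => (g+1)/2 * (1-g)^k * sin ((1-g)*y + u))); apply H.
Qed.

Lemma dseq0 g x : dseq g 0 x = F g x.
Proof.
  unfold dseq, F. simpl. replace (0 * PI / 2) with 0 by field. rewrite !Rplus_0_r.
  replace ((1+g)*x) with (x + g*x) by ring. replace ((1-g)*x) with (x - g*x) by ring.
  rewrite sin_plus, sin_minus. field.
Qed.

Lemma dseq1 g x : dseq g 1 x = (1 - g^2) * sin x * sin (g*x).
Proof.
  unfold dseq. replace (INR 1) with (INR (S 0)) by reflexivity. rewrite !sin_shift. simpl.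
  replace (0 * PI / 2) with 0 by field. rewrite !Rplus_0_r.
  replace ((1+g)*x) with (x + g*x) by ring. replace ((1-g)*x) with (x - g*x) by ring.
  rewrite cos_plus, cos_minus. field.
Qed.

Lemma cos_shift u k : cos (u + INR (S k) * PI/2) = - sin (u + INR k * PI/2).
Proof. rewrite S_INR. replace (u + (INR k + 1) * PI/2) with ((u + INR k * PI/2) + PI/2) by field.
  rewrite cos_plus, sin_PI2, cos_PI2. ring. Qed.

Lemma dseq2 g x : dseq g 2 x = - ((g-1)/2 * (1+g)^2 * sin ((1+g)*x) + (g+1)/2 * (1-g)^2 * sin ((1-g)*x)).
Proof.
  unfold dseq. replace (INR 2) with (INR (S (S 0))) by reflexivity. rewrite !sin_shift, !cos_shift. simpl.
  replace (0 * PI / 2) with 0 by field. rewrite !Rplus_0_r. ring.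
Qed.

Lemma dseq3 g x : dseq g 3 x = - ((g-1)/2 * (1+g)^3 * cos ((1+g)*x) + (g+1)/2 * (1-g)^3 * cos ((1-g)*x)).
Proof.
  unfold dseq. replace (INR 3) with (INR (S (S (S 0)))) by reflexivity.
  rewrite !sin_shift, !cos_shift, !sin_shift. simpl.
  replace (0 * PI / 2) with 0 by field. rewrite !Rplus_0_r. ring.
Qed.


Lemma sin_gx_zero g x : 0 < g -> F g x = 0 -> sin x = 0 -> sin (g*x) = 0.
Proof.
  intros Hg HF Hs. unfold F in HF. rewrite Hs in HF.
  pose proof (sin2_cos2 x) as H. unfold Rsqr in H. rewrite Hs in H.
  assert (cos x <> 0) by nra. 
  assert (sin (g*x) * cos x = 0) by lra.
  apply Rmult_integral in H1. destruct H1; auto. contradiction.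
Qed.

Lemma sin_x_zero g x : 0 < g -> F g x = 0 -> sin (g*x) = 0 -> sin x = 0.
Proof.
  intros Hg HF Hs. unfold F in HF. rewrite Hs in HF.
  pose proof (sin2_cos2 (g*x)) as H. unfold Rsqr in H. rewrite Hs in H.
  assert (cos (g*x) <> 0) by nra.
  assert (g * (sin x * cos (g*x)) = 0) by lra.
  apply Rmult_integral in H1. destruct H1. lra.
  apply Rmult_integral in H1. destruct H1; auto. contradiction.
Qed.

Lemma order_simple g x : 0 < g -> g <> 1 -> F g x = 0 -> sin x <> 0 -> zero_order (F g) x 1.
Proof.
  intros Hg Hg1 HF Hs. exists (dseq g). split; [|split; [|split]].
  - apply dseq0.
  - intros. apply dseq_deriv.
  - intros k Hk. assert (k = 0%nat) by lia. subst. rewrite dseq0. auto.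
  - rewrite dseq1. intros H.
    assert (Hsg : sin (g*x) <> 0) by (intros H'; apply Hs; apply (sin_x_zero g); auto).
    assert (1 - g^2 <> 0).
    { intros H'. assert ((1-g)*(1+g) = 0) by (rewrite <- H'; ring).
      apply Rmult_integral in H0. destruct H0; lra. }
    apply Rmult_integral in H. destruct H as [H|H]; [apply Rmult_integral in H; destruct H|]; auto.
Qed.

Lemma order_triple g x : 0 < g -> g <> 1 -> F g x = 0 -> sin x = 0 -> zero_order (F g) x 3.
Proof.
  intros Hg Hg1 HF Hs.
  pose proof (sin_gx_zero g x Hg HF Hs) as Hsg.
  assert (Ha : sin ((1+g)*x) = 0).
  { replace ((1+g)*x) with (x+g*x) by ring. rewrite sin_plus, Hs, Hsg. ring. }
  assert (Hb : sin ((1-g)*x) = 0).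
  { replace ((1-g)*x) with (x-g*x) by ring. rewrite sin_minus, Hs, Hsg. ring. }
  exists (dseq g). split; [|split; [|split]].
  - apply dseq0.
  - intros. apply dseq_deriv.
  - intros k Hk. destruct k as [|[|[|k]]].
    + rewrite dseq0; auto.
    + rewrite dseq1, Hs. ring.
    + rewrite dseq2, Ha, Hb. ring.
    + lia.
  - rewrite dseq3.
    replace ((1+g)*x) with (x+g*x) by ring. replace ((1-g)*x) with (x-g*x) by ring.
    rewrite cos_plus, cos_minus, Hs, Hsg.
    pose proof (sin2_cos2 x) as H1. unfold Rsqr in H1. rewrite Hs in H1.
    pose proof (sin2_cos2 (g*x)) as H2. unfold Rsqr in H2. rewrite Hsg in H2.
    assert (Hc : cos x * cos (g*x) <> 0) by (intros Hc; nra).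
    replace (- ((g - 1) / 2 * (1 + g) ^ 3 * (cos x * cos (g * x) - 0 * 0) +
     (g + 1) / 2 * (1 - g) ^ 3 * (cos x * cos (g * x) + 0 * 0)))
     with (- (2*g*(g*g-1)) * (cos x * cos (g*x))) by field.
    intros H. apply Rmult_integral in H. destruct H; [|contradiction].
    assert (g*(g-1)*(g+1) = 0) by lra.
    apply Rmult_integral in H0. destruct H0 as [H0|H0]; [apply Rmult_integral in H0; destruct H0|]; lra.
Qed.

Lemma zero_order_unique f x m1 m2 : zero_order f x m1 -> zero_order f x m2 -> m1 = m2.
Proof.
  intros [d1 [A1 [B1 [C1 D1]]]] [d2 [A2 [B2 [C2 D2]]]].
  assert (Heq : forall k y, d1 k y = d2 k y).
  { induction k as [|k IH]; intros y. rewrite A1, A2; auto.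
    assert (Hf : d1 k = d2 k) by (apply functional_extensionality; auto).
    apply (uniqueness_limite (d1 k) y). apply B1. rewrite Hf. apply B2. }
  destruct (Nat.lt_trichotomy m1 m2) as [H|[H|H]]; auto.
  - exfalso. apply D1. rewrite Heq. apply C2; auto.
  - exfalso. apply D2. rewrite <- Heq. apply C1; auto.
Qed.


Definition sgn (g : R) : R := if Rlt_dec g 1 then 1 else -1.
Definition psi (g x : R) : R := sgn g * phi g x.

Lemma sgn_pos g : 0 < g -> g <> 1 -> 0 < sgn g * (1 - g^2) /\ sgn g * (1 - g) = Rabs (1 - g).
Proof.
  intros Hg H. unfold sgn. destruct (Rlt_dec g 1).
  - split. nra. rewrite Rabs_right by lra. ring.
  - split. nra. rewrite Rabs_left by lra. ring.
Qed.

Lemma psi_deriv g x : 0 < g ->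
  derivable_pt_lim (psi g) x (sgn g * (2*(1-g^2)*(1-cos(2*g*x)) / Efun g x)).
Proof. intros Hg. unfold psi. apply derivable_pt_lim_scal. apply phi_deriv; auto. Qed.

Lemma psi_incr g : 0 < g -> g <> 1 -> forall x y, x < y -> psi g x < psi g y.
Proof.
  intros Hg Hg1. destruct (sgn_pos g Hg Hg1) as [Hs _].
  apply (strict_incr (psi g) (fun x => sgn g * (2*(1-g^2)*(1-cos(2*g*x)) / Efun g x)) g Hg).
  - intros; apply psi_deriv; auto.
  - intros x. pose proof (E_pos g x Hg). pose proof (COS_bound (2*g*x)).
    replace (sgn g * (2 * (1 - g ^ 2) * (1 - cos (2 * g * x)) / Efun g x)) with
      ((sgn g * (1-g^2)) * (2 * (1 - cos (2*g*x))) / Efun g x) by (field; lra).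
    apply Rmult_le_pos. apply Rmult_le_pos; lra. apply Rlt_le, Rinv_0_lt_compat; lra.
  - intros x Hsx. pose proof (E_pos g x Hg).
    replace (2*g*x) with (2*(g*x)) by ring. rewrite cos_2a_sin.
    replace (sgn g * (2 * (1 - g ^ 2) * (1 - (1 - 2 * sin (g * x) * sin (g * x))) / Efun g x)) with
      ((sgn g * (1-g^2)) * (4 * (sin (g*x) * sin (g*x))) / Efun g x) by (field; lra).
    assert (0 < sin (g*x) * sin (g*x)) by (apply Rsqr_pos_lt; auto).
    apply Rdiv_lt_0_compat; [|lra]. apply Rmult_lt_0_compat; lra.
Qed.

Lemma psi_cont g : 0 < g -> continuity (psi g).
Proof. intros Hg x. apply derivable_continuous_pt. exists (sgn g * (2*(1-g^2)*(1-cos(2*g*x)) / Efun g x)).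
  apply psi_deriv; auto. Qed.

Lemma psi_0 g : psi g 0 = 0.
Proof. unfold psi, phi, vfun. replace (2*g*0) with 0 by ring. rewrite sin_0, Rmult_0_r. replace ((g-1)*0/Dfun g 0) with 0 by (unfold Rdiv; ring). rewrite atan_0. ring. Qed.

Lemma psi_zero g x : 0 < g -> (F g x = 0 <-> exists k : Z, psi g x = IZR k * PI).
Proof.
  intros Hg. rewrite F_zero_iff by auto.
  assert (E : sin (psi g x) = sgn g * sin (phi g x)).
  { unfold psi, sgn. destruct (Rlt_dec g 1). rewrite !Rmult_1_l; auto.
    replace (-1 * phi g x) with (- phi g x) by ring. rewrite sin_neg. ring. }
  assert (Hs : sgn g <> 0) by (unfold sgn; destruct (Rlt_dec g 1); lra).
  split.
  - intros H. apply sin_eq_0_0. rewrite E, H. ring.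
  - intros H. apply sin_eq_0_1 in H. rewrite E in H. apply Rmult_integral in H. destruct H; auto. contradiction.
Qed.

Lemma psi_bound g r : 0 < g -> g <> 1 -> Rabs (psi g r - Rabs (1 - g) * r) <= PI / 2.
Proof.
  intros Hg Hg1. destruct (sgn_pos g Hg Hg1) as [_ Hs]. rewrite <- Hs.
  unfold psi, phi. destruct (atan_bound (vfun g r)) as [A1 A2].
  replace (sgn g * ((1 - g) * r + atan (vfun g r)) - sgn g * (1 - g) * r) with (sgn g * atan (vfun g r)) by ring.
  unfold sgn. destruct (Rlt_dec g 1); apply Rabs_le; lra.
Qed.


Definition ord (x : R) : nat := if Req_EM_T (sin x) 0 then 3%nat else 1%nat.
Definition isz (x : R) : bool := if Req_EM_T (sin x) 0 then true else false.

Lemma ord_ok g x : 0 < g -> g <> 1 -> F g x = 0 -> zero_order (F g) x (ord x).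
Proof.
  intros. unfold ord. destruct (Req_EM_T (sin x) 0).
  apply order_triple; auto. apply order_simple; auto.
Qed.

Lemma forall2_map {A B} (P : A -> B -> Prop) (f : A -> B) l :
  (forall x, In x l -> P x (f x)) -> Forall2 P l (map f l).
Proof. induction l; simpl; intros H; constructor; auto. Qed.

Lemma sum_ord l : list_sum (map ord l) = (length l + 2 * length (filter isz l))%nat.
Proof.
  induction l as [|x l IH]; simpl; auto. rewrite IH. unfold ord, isz.
  destruct (Req_EM_T (sin x) 0); simpl; lia.
Qed.

Lemma geom_list g r : 0 < g -> g <> 1 -> exists l M, real_ITEs_upto g r l /\ length l = M /\
  (0 <= r -> INR M <= psi g r / PI < INR M + 1).
Proof.
  intros Hg Hg1.
  destruct (count (psi g) (psi_cont g Hg) (psi_incr g Hg Hg1) (psi_0 g) r) as [l [M [Hnd [Hin [Hl HM]]]]].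
  exists l, M. split; auto. split; auto. intros x. rewrite Hin. rewrite (psi_zero g x Hg). tauto.
Qed.

Lemma Nalg_exists g r : 0 < g -> g <> 1 -> exists n, Nalg g r n.
Proof.
  intros Hg Hg1. destruct (geom_list g r Hg Hg1) as [l [M [Hl _]]].
  exists (list_sum (map ord l)). exists l, (map ord l). split; auto. split; auto.
  apply forall2_map. intros x Hx. apply ord_ok; auto. apply Hl; auto.
Qed.

Lemma Nalg_val g r n : 0 < g -> g <> 1 -> Nalg g r n ->
  exists l, real_ITEs_upto g r l /\ n = list_sum (map ord l).
Proof.
  intros Hg Hg1 [l [ms [Hl [Hf Hn]]]]. exists l. split; auto. subst n. f_equal.
  assert (Hin : forall x, In x l -> F g x = 0) by (intros x Hx; apply Hl; auto).
  clear Hl. induction Hf; simpl; auto. f_equal.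
  - symmetry. apply (zero_order_unique (F g) x). apply ord_ok; auto. apply Hin; simpl; auto. auto.
  - apply IHHf. intros; apply Hin; simpl; auto.
Qed.

Lemma ites_len g r l1 l2 : real_ITEs_upto g r l1 -> real_ITEs_upto g r l2 -> length l1 = length l2.
Proof.
  intros [N1 H1] [N2 H2]. apply nodup_len; auto. intros x; rewrite H1, H2; tauto.
Qed.

Lemma filter_nil l : (forall x, In x l -> isz x = false) -> filter isz l = nil.
Proof. induction l as [|x l IH]; simpl; intros H; auto. rewrite H by auto. apply IH; auto. Qed.

Lemma irr_no_sin g x : 0 < g -> irrational g -> 0 < x -> F g x = 0 -> sin x <> 0.
Proof.
  intros Hg Hirr Hx HF Hs. pose proof (sin_gx_zero g x Hg HF Hs) as Hsg.
  apply sin_eq_0_0 in Hs. apply sin_eq_0_0 in Hsg. destruct Hs as [k Hk]. destruct Hsg as [j Hj].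
  apply Hirr. exists j, k. pose proof PI_RGT_0.
  assert (Hk0 : IZR k <> 0) by (intros E; rewrite E in Hk; lra).
  split. intros E; subst; apply Hk0; reflexivity.
  rewrite Hk in Hj. apply (Rmult_eq_reg_r (IZR k * PI)). rewrite Hj. field. auto.
  intros E. apply Rmult_integral in E. destruct E; lra.
Qed.

Lemma rat_char p q x : (0 < p)%nat -> (0 < q)%nat -> Nat.gcd p q = 1%nat ->
  0 < x -> (F (INR p / INR q) x = 0 /\ sin x = 0 <-> exists k : Z, x / INR q = IZR k * PI).
Proof.
  intros Hp Hq Hgcd Hx. pose proof PI_RGT_0 as Hpi.
  assert (HqR : 0 < INR q) by (apply lt_0_INR; lia).
  assert (HpR : 0 < INR p) by (apply lt_0_INR; lia).
  assert (Hg : 0 < INR p / INR q) by (apply Rdiv_lt_0_compat; auto).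
  split.
  - intros [HF Hs]. pose proof (sin_gx_zero _ x Hg HF Hs) as Hsg.
    apply sin_eq_0_0 in Hs. apply sin_eq_0_0 in Hsg. destruct Hs as [k Hk]. destruct Hsg as [j Hj].
    rewrite Hk in Hj.
    assert (E : IZR (Z.of_nat p * k) = IZR (j * Z.of_nat q)).
    { rewrite !mult_IZR, <- !INR_IZR_INZ. apply (Rmult_eq_reg_r (PI / INR q)).
      replace (INR p * IZR k * (PI / INR q)) with (INR p / INR q * (IZR k * PI)) by (field; lra).
      rewrite Hj. field. lra. apply Rgt_not_eq. apply Rdiv_lt_0_compat; lra. }
    apply eq_IZR in E.
    assert (Hk0 : (0 < k)%Z).
    { apply lt_IZR. assert (0 < IZR k * PI) by lra. nra. }
    assert (Hd : Nat.divide q (p * Z.to_nat k)).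
    { exists (Z.to_nat j). lia. }
    apply Nat.gauss in Hd.
    + destruct Hd as [k' Hk']. exists (Z.of_nat k'). rewrite Hk.
      replace k with (Z.of_nat (Z.to_nat k)) by lia. rewrite Hk'. rewrite Nat2Z.inj_mul, mult_IZR, <- !INR_IZR_INZ. field. lra.
    + rewrite Nat.gcd_comm. auto.
  - intros [k Hk]. assert (Hx' : x = IZR (k * Z.of_nat q) * PI).
    { rewrite mult_IZR, <- INR_IZR_INZ. apply (Rmult_eq_reg_r (/ INR q)).
      replace (x * / INR q) with (x / INR q) by reflexivity. rewrite Hk. field. lra.
      apply Rinv_neq_0_compat; lra. }
    assert (Hs : sin x = 0) by (apply sin_eq_0_1; eauto).
    assert (Hsg : sin (INR p / INR q * x) = 0).
    { apply sin_eq_0_1. exists (k * Z.of_nat p)%Z. rewrite Hx', !mult_IZR, <- !INR_IZR_INZ. field. lra. }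
    split; auto. unfold F. rewrite Hs, Hsg. ring.
Qed.

Lemma filter_spec g r l : real_ITEs_upto g r l ->
  NoDup (filter isz l) /\ forall x, In x (filter isz l) <-> (0 < x <= r /\ F g x = 0 /\ sin x = 0).
Proof.
  intros [N H]. split. apply NoDup_filter; auto.
  intros x. rewrite filter_In, H. unfold isz. destruct (Req_EM_T (sin x) 0).
  - split; intros; tauto.
  - split. intros [_ D]; discriminate. intros [_ [_ E]]; contradiction.
Qed.


Lemma irr_part gamma (Hpos : 0 < gamma) (Hne1 : gamma <> 1) :
  irrational gamma ->
     forall r : R,
       (exists n, Nalg gamma r n) /\ (exists m, Ngeom gamma r m) /\
       (forall n m, Nalg gamma r n -> Ngeom gamma r m -> n = m).
Proof.
  intros Hirr r. split; [apply Nalg_exists; auto|split].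
  - destruct (geom_list gamma r Hpos Hne1) as [l [M [Hl _]]]. exists (length l), l. auto.
  - intros n m Hn [l2 [Hl2 Hm]]. destruct (Nalg_val gamma r n Hpos Hne1 Hn) as [l1 [Hl1 Hn1]].
    subst. rewrite sum_ord. rewrite filter_nil. simpl. rewrite Nat.add_0_r. apply (ites_len gamma r); auto.
    intros x Hx. unfold isz. destruct (Req_EM_T (sin x) 0); auto. exfalso.
    apply Hl1 in Hx. apply (irr_no_sin gamma x Hpos Hirr); tauto.
Qed.

Lemma rat_part gamma (Hpos : 0 < gamma) (Hne1 : gamma <> 1) :
  (forall p q : nat, (0 < p)%nat -> (0 < q)%nat -> Nat.gcd p q = 1%nat ->
     gamma = INR p / INR q ->
     exists C R0 : R, forall r : R, R0 <= r ->
       (exists n, Nalg gamma r n) /\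
       (forall n, Nalg gamma r n ->
          Rabs (INR n - (Rabs (1 - INR p / INR q) + 2 / INR q) * r / PI) <= C)).
Proof.
  intros p q Hp Hq Hgcd Hg. exists 4, 0. intros r Hr. split; [apply Nalg_exists; auto|].
  intros n Hn. destruct (Nalg_val gamma r n Hpos Hne1 Hn) as [l [Hl Hn1]]. subst n. rewrite sum_ord.
  destruct (geom_list gamma r Hpos Hne1) as [lc [M [Hlc [HlcM HM]]]].
  specialize (HM Hr). rewrite (ites_len _ _ _ _ Hl Hlc), HlcM.
  assert (HqR : 0 < INR q) by (apply lt_0_INR; lia).
  pose proof PI_RGT_0 as Hpi.
  set (psi2 := fun x => / INR q * x).
  assert (Hd2 : forall x, derivable_pt_lim psi2 x (/ INR q)).
  { intros x. replace (/ INR q) with (/ INR q * 1) by ring. apply derivable_pt_lim_scal, derivable_pt_lim_id. }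
  assert (Hc2 : continuity psi2).
  { intros x. apply derivable_continuous_pt. exists (/ INR q). apply Hd2. }
  assert (Hi2 : forall x y, x < y -> psi2 x < psi2 y).
  { intros x y Hxy. unfold psi2. apply Rmult_lt_compat_l; auto. apply Rinv_0_lt_compat; auto. }
  assert (H02 : psi2 0 = 0) by (unfold psi2; ring).
  destruct (count psi2 Hc2 Hi2 H02 r) as [l2 [J [N2 [Hin2 [Hlen2 HJ]]]]].
  specialize (HJ Hr).
  destruct (filter_spec gamma r l Hl) as [Nf Hf].
  assert (Hfl : length (filter isz l) = J).
  { rewrite <- Hlen2. apply nodup_len; auto. intros x. rewrite Hf, Hin2.
    split.
    - intros [Hx HH]. split; auto. subst gamma. apply (rat_char p q x Hp Hq Hgcd) in HH; [|lra].
      destruct HH as [k Hk]. exists k. unfold psi2. rewrite <- Hk. unfold Rdiv. ring.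
    - intros [Hx [k Hk]]. split; auto. subst gamma. apply (rat_char p q x Hp Hq Hgcd); [lra|].
      exists k. rewrite <- Hk. unfold psi2, Rdiv. ring. }
  rewrite Hfl.
  pose proof (psi_bound gamma r Hpos Hne1) as Hb. rewrite <- Hg.
  rewrite plus_INR, mult_INR. simpl (INR 2). 
  set (a := psi gamma r) in *. set (rp := Rabs (1 - gamma) * r) in *.
  assert (Hb' : Rabs (a / PI - rp / PI) <= 1/2).
  { replace (a / PI - rp / PI) with ((a - rp) * / PI) by (field; lra).
    rewrite Rabs_mult, Rabs_inv, (Rabs_right PI) by lra.
    apply Rmult_le_reg_r with PI; auto. replace (Rabs (a - rp) * / PI * PI) with (Rabs (a - rp)) by (field; lra). lra. }
  assert (HJ' : psi2 r / PI = r / INR q / PI) by (unfold psi2, Rdiv; ring).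
  rewrite HJ' in HJ.
  replace ((Rabs (1 - gamma) + 2 / INR q) * r / PI) with (rp / PI + (1 + 1) * (r / INR q / PI)) by (unfold rp; field; lra).
  pose proof (Rle_abs (a / PI - rp / PI)). pose proof (Rle_abs (-(a / PI - rp / PI))). rewrite Rabs_Ropp in *. apply Rabs_le. lra.
Qed.


Theorem theorem3 (gamma : R) (Hpos : 0 < gamma) (Hne1 : gamma <> 1) :
  (irrational gamma ->
     forall r : R,
       (exists n, Nalg gamma r n) /\ (exists m, Ngeom gamma r m) /\
       (forall n m, Nalg gamma r n -> Ngeom gamma r m -> n = m)) /\
  (forall p q : nat, (0 < p)%nat -> (0 < q)%nat -> Nat.gcd p q = 1%nat ->
     gamma = INR p / INR q ->
     exists C R0 : R, forall r : R, R0 <= r ->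
       (exists n, Nalg gamma r n) /\
       (forall n, Nalg gamma r n ->
          Rabs (INR n - (Rabs (1 - INR p / INR q) + 2 / INR q) * r / PI) <= C)).
Proof.
  split. apply irr_part; auto. apply rat_part; auto.
Qed.
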